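(* Let $\gamma_1,\dots,\gamma_n,\beta_1,\dots,\beta_n\in\mathbb{C}$ be non-zero with $\gamma_j=\lambda+i\omega_j$, let $H^5_1,\dots,H^5_n$ be complex polynomials in $u_1,\dots,u_n,\bar u_1,\dots,\bar u_n$ such that for each $k$ the $k$th non-resonance condition of $H^5_k$ holds, and set $P_k:=\widehat{H}^5_k$ (the $k$th modified polynomial of $H^5_k$) and $P=(P_1,\dots,P_n)$. Define $$L^1_k(u):=[P_k\|(\beta_1u_1|u_1|^2,\dots,\beta_nu_n|u_n|^2)](u),\qquad L^2_k(u):=[\beta_ku_k|u_k|^2\|P](u).$$ Then $S_k(u):=L^1_k(u)-L^2_k(u)$ can be expressed as a sum of (complex multiples of) terms of the form $u_k^2\overline{R(u)}$ and $|u_j|^2R(u)$, with $j\in\{1,\dots,n\}$ and $R(u)$ a monomial term appearing in $P_k(u)$.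
   Context: For a monomial $c\,u_1^{s_1}\cdots u_n^{s_n}\bar u_1^{t_1}\cdots\bar u_n^{t_n}$, its $k$th non-resonance condition is $\sum_j s_j\omega_j-\sum_j t_j\omega_j-\omega_k\neq0$; that of a polynomial is the conjunction over its monomial terms. The modified polynomial $\widehat{H}^5_k$ is obtained from $H^5_k$ by dividing each monomial $c\,u^{s}\bar u^{t}$ by $\sum_j s_j\gamma_j+\sum_j t_j\bar\gamma_j-\gamma_k$. The bracket is $[R\|S](u)=\sum_{j}\Big(\frac{\partial R}{\partial u_j}S_j+\frac{\partial R}{\partial\bar u_j}\overline{S_j}\Big)$, treating $u_j,\bar u_j$ as independent variables. *)

(* Defs.v *)
(* with multinomials' mpoly for polynomials in
   u_1..u_n, ubar_1..ubar_n (treated as 2n independent variables). *)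
From HB Require Import structures.
From mathcomp Require Import all_boot all_order all_algebra.
From mathcomp Require Import mpoly.
Set Implicit Arguments. Unset Strict Implicit. Unset Printing Implicit Defensive.
Import Order.TTheory GRing.Theory Num.Theory Num.Syntax.
Local Open Scope ring_scope.

Section Defs.
Variables (C : numClosedFieldType) (n : nat).

Definition uidx (j : 'I_n) : 'I_(n + n) := lshift n j.
Definition ubidx (j : 'I_n) : 'I_(n + n) := rshift n j.

Definition uv (j : 'I_n) : {mpoly C[n + n]} := 'X_(uidx j).
Definition ubv (j : 'I_n) : {mpoly C[n + n]} := 'X_(ubidx j).

Definition sexp (m : 'X_{1..n + n}) (j : 'I_n) : nat := m (uidx j).
Definition texp (m : 'X_{1..n + n}) (j : 'I_n) : nat := m (ubidx j).

Definition mterm (p : {mpoly C[n + n]}) (m : 'X_{1..n + n}) : {mpoly C[n + n]} :=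
  p@_m *: 'X_[m].

Definition conjp (p : {mpoly C[n + n]}) : {mpoly C[n + n]} :=
  \sum_(m <- msupp p)
     (p@_m)^* *: \prod_(j < n) (ubv j ^+ sexp m j * uv j ^+ texp m j).

Definition nonres (om : 'I_n -> C) (k : 'I_n) (p : {mpoly C[n + n]}) : Prop :=
  forall m, m \in msupp p ->
    \sum_(j < n) (sexp m j)%:R * om j - \sum_(j < n) (texp m j)%:R * om j
      - om k != 0.

Definition modified (gam : 'I_n -> C) (k : 'I_n) (p : {mpoly C[n + n]})
  : {mpoly C[n + n]} :=
  \sum_(m <- msupp p)
    (p@_m / (\sum_(j < n) (sexp m j)%:R * gam j
             + \sum_(j < n) (texp m j)%:R * (gam j)^* - gam k)) *: 'X_[m].

Definition bracket (R : {mpoly C[n + n]}) (S : 'I_n -> {mpoly C[n + n]})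
  : {mpoly C[n + n]} :=
  \sum_(j < n) (mderiv (uidx j) R * S j + mderiv (ubidx j) R * conjp (S j)).

(* the cubic field beta_j u_j |u_j|^2 = beta_j u_j (u_j ubar_j) *)
Definition cubic (beta : 'I_n -> C) (j : 'I_n) : {mpoly C[n + n]} :=
  beta j *: (uv j * (uv j * ubv j)).

End Defs.

(* Main.v *)
Require Import Defs.
From HB Require Import structures.
From mathcomp Require Import all_boot all_order all_algebra.
From mathcomp Require Import mpoly.
From mathcomp Require Import ring.
Import Order.TTheory GRing.Theory Num.Theory Num.Syntax.
Local Open Scope ring_scope.

Section H.
Variables (C : numClosedFieldType) (n : nat).
Implicit Types (p : {mpoly C[n + n]}) (m : 'X_{1..n + n}).

Lemma mderivXX (i l : 'I_(n + n)) :
  mderiv i ('X_l : {mpoly C[n+n]}) = (l == i)%:R.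
Proof.
rewrite mderivX mnm1E; case: eqP => [->|_]; last by rewrite scale0r.
by rewrite -{1}(add0m U_(i)%MM) addmK mpolyX0 scale1r.
Qed.

Lemma euler1 (i : 'I_(n + n)) m :
  mderiv i ('X_[m] : {mpoly C[n+n]}) * 'X_i = (m i)%:R *: 'X_[m].
Proof.
rewrite mderivX -scalerAl; case E: (m i) => [|k]; first by rewrite !scale0r.
rewrite -mpolyXD submK //; apply/mnm_lepP => j; rewrite mnm1E.
by case: eqP => // <-; rewrite E.
Qed.

Lemma euler (i : 'I_(n + n)) p :
  mderiv i p * 'X_i = \sum_(m <- msupp p) (m i)%:R *: mterm p m.
Proof.
rewrite {1}[p]mpolyE raddf_sum /= mulr_suml; apply: eq_bigr => m _.
by rewrite mderivZ -scalerAl euler1 /mterm scalerA mulrC -scalerA.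
Qed.

Definition mono m : {mpoly C[n + n]} :=
  \prod_(j < n) (ubv C j ^+ sexp m j * uv C j ^+ texp m j).

Lemma conjpZX c m : conjp (c *: 'X_[m]) = c^* *: mono m.
Proof.
have [->|c0] := eqVneq c 0.
  by rewrite scale0r conjC0 scale0r /conjp msupp0 big_nil.
by rewrite /conjp msuppMCX // big_seq1 mcoeffZ mcoeffX eqxx mulr1.
Qed.

Lemma conjpE p : conjp p = \sum_(m <- msupp p) conjp (mterm p m).
Proof. by apply: eq_bigr => m _; rewrite /mterm conjpZX. Qed.

Lemma conj_cubic (beta : 'I_n -> C) j :
  conjp (cubic beta j) = (beta j)^* *: (ubv C j * ubv C j * uv C j).
Proof.
rewrite /cubic /uv /ubv -!mpolyXD conjpZX; congr (_ *: _).
rewrite /mono (bigD1 j) //= big1 ?mulr1.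
  rewrite /sexp /texp !mnmDE !mnm1E /uidx /ubidx !eq_shift eqxx /=.
  by rewrite expr1 expr2 /ubv /uv -!mpolyXD.
move=> i /negbTE ij; rewrite /sexp /texp !mnmDE !mnm1E /uidx /ubidx !eq_shift.
by rewrite eq_sym ij /= !expr0 mulr1.
Qed.

Lemma dcubic (beta : 'I_n -> C) k j :
  mderiv (uidx j) (cubic beta k) =
    (k == j)%:R *: (beta k *: (2%:R *: (uv C k * ubv C k))) /\
  mderiv (ubidx j) (cubic beta k) =
    (k == j)%:R *: (beta k *: (uv C k * uv C k)).
Proof.
rewrite /cubic /uv /ubv !mderivZ !mderivM !mderivXX /uidx /ubidx !eq_shift.
case: eqP => [->|_] /=; split; rewrite ?scale0r ?scale1r ?mul0r ?mulr0 ?add0r ?addr0 ?mul1r ?mulr1 //.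
all: try (congr (_ *: _); rewrite scaler_nat; by rewrite mulr2n). all: by rewrite mulr0 scaler0.
Qed.


Lemma deltasum (c : C) (Y : 'I_n -> {mpoly C[n + n]}) k :
  \sum_(j < n) ((j == k)%:R * c) *: Y j = c *: Y k.
Proof.
rewrite (bigD1 k) //= eqxx mul1r big1 ?addr0 // => j /negbTE ->.
by rewrite mul0r scale0r.
Qed.

End H.

Theorem mainTheorem9 (C : numClosedFieldType) (n : nat) (lam : C)
  (om gam beta : 'I_n -> C) (H : 'I_n -> {mpoly C[n + n]}) :
  lam \is Num.real ->
  (forall j, om j \is Num.real) ->
  (forall j, gam j = lam + 'i * om j) ->
  (forall j, gam j != 0) ->
  (forall j, beta j != 0) ->
  (forall k, nonres om k (H k)) ->
  let P := fun k => modified gam k (H k) in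
  let L1 := fun k => bracket (P k) (cubic beta) in
  let L2 := fun k => bracket (cubic beta k) P in
  forall k : 'I_n,
  exists (a : 'X_{1..n + n} -> 'I_n -> C) (b : 'X_{1..n + n} -> C),
    L1 k - L2 k =
    \sum_(m <- msupp (P k))
      (b m *: (uv C k ^+ 2 * conjp (mterm (P k) m))
       + \sum_(j < n) a m j *: ((uv C j * ubv C j) * mterm (P k) m)).
Proof.
move=> _ _ _ _ _ _ P L1 L2 k.
exists (fun m j => beta j * (sexp m j)%:R + (beta j)^* * (texp m j)%:R
                   - (j == k)%:R * (beta k * 2%:R)).
exists (fun _ => - beta k).
rewrite /L1 /L2 /bracket.
set p := P k.
have E1 j : mderiv (uidx j) p * cubic beta j + mderiv (ubidx j) p * conjp (cubic beta j)
  = \sum_(m <- msupp p) (beta j * (sexp m j)%:R + (beta j)^* * (texp m j)%:R)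
        *: ((uv C j * ubv C j) * mterm p m).
  rewrite conj_cubic /cubic.
  have -> : mderiv (uidx j) p * (beta j *: (uv C j * (uv C j * ubv C j)))
      = beta j *: ((uv C j * ubv C j) * (mderiv (uidx j) p * uv C j)).
    by rewrite -scalerAr; congr (_ *: _); ring.
  have -> : mderiv (ubidx j) p * ((beta j)^* *: (ubv C j * ubv C j * uv C j))
      = (beta j)^* *: ((uv C j * ubv C j) * (mderiv (ubidx j) p * ubv C j)).
    by rewrite -scalerAr; congr (_ *: _); ring.
  rewrite /uv /ubv !euler !mulr_sumr !scaler_sumr -big_split /=.
  apply: eq_bigr => m _.
  by rewrite -!scalerAr !scalerA -scalerDl /sexp /texp; congr (_ *: _); ring.
have pE : p = \sum_(m <- msupp p) mterm p m := mpolyE p.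
have E2 : \sum_(j < n)
     ((cubic beta k)^`M(uidx j) * P j +
      (cubic beta k)^`M(ubidx j) * conjp (P j)) =
   \sum_(m <- msupp p) ((beta k * 2%:R) *: ((uv C k * ubv C k) * mterm p m)
        + beta k *: (uv C k ^+ 2 * conjp (mterm p m))).
  rewrite (bigD1 k) //= big1 ?addr0; last first.
    move=> j /negbTE jk; have [d1 d2] := @dcubic _ _ beta k j.
    by rewrite d1 d2 eq_sym jk !scale0r !mul0r addr0.
  have [d1 d2] := @dcubic _ _ beta k k; rewrite d1 d2 eqxx !scale1r -/p.
  rewrite conjpE {1}pE !mulr_sumr -big_split; apply: eq_bigr => m _ /=.
  by rewrite -!scalerAl !scalerA expr2 -!scalerAr.
rewrite E2 (eq_bigr _ (fun j _ => E1 j)) exchange_big -sumrB.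
apply: eq_bigr => m _.
rewrite [X in _ = _ + X](eq_bigr (fun j => (beta j * (sexp m j)%:R + (beta j)^* * (texp m j)%:R)
   *: (uv C j * ubv C j * mterm p m) - ((j == k)%:R * (beta k * 2%:R)) *: (uv C j * ubv C j * mterm p m))); last first.
  by move=> j _; rewrite scalerBl.
rewrite sumrB deltasum scaleNr.
by rewrite opprD addrA addrC.
Qed.
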